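(* Let $n\ge2$, $l_1,\dots,l_n\ge0$, with $l_{\max},l_{\min},i_M\neq i_m$ as below. Then $$Z_a\cap Z_{Br}=\prod_{m\ge1}\Phi_m^{\lfloor\frac{2l_{\max}+1}{m}\rfloor-\lfloor\frac{l_{\max}}{m}\rfloor-\lfloor\frac1m\rfloor+\max\left(0,\ \sum_{i\neq i_M,i_m}t_{l_i,m}-\lfloor\frac{l_{\min}}{m}\rfloor\right)}\,\mathbb{Z}[q,q^{-1}].$$
   Context: In $\mathbb{Z}[q,q^{-1}]$ set $\{i\}_q=q^i-1$, $\{i\}_{q,n}=\{i\}_q\cdots\{i-n+1\}_q$ (equal to $1$ for $n=0$), $\{n\}_q!=\{n\}_{q,n}$. For $l\ge0$, $I_l$ is the ideal generated by $f_{l,k}=\{l-k\}_q!\{k\}_q!$, $0\le k\le l$. Let $l_{\max}=\max_i l_i$, $l_{\min}=\min_i l_i$, and fix $i_M\ne i_m$ with $l_{i_M}=l_{\max}$, $l_{i_m}=l_{\min}$. Define $Z_a=\frac{\{2l_{\max}+1\}_{q,l_{\max}+1}}{\{1\}_q}\mathbb{Z}[q,q^{-1}]$ and $Z_{Br}=\frac{\{2l_{\max}+1\}_{q,l_{\max}+1}}{\{1\}_q\{l_{\min}\}_q!}\prod_{i\neq i_M,i_m}I_{l_i}$ (product of ideals over $i\in\{1,\dots,n\}\setminus\{i_M,i_m\}$). $t_{l,m}=\lfloor\frac{l+1}{m}\rfloor-1$ for $1\le m\le l$, $t_{l,m}=0$ for $m>l$. $\Phi_m$ is the $m$th cyclotomic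 polynomial. (The paper writes $\lfloor\frac{l_{\max}-1}{m}\rfloor$ in place of $\lfloor\frac{l_{\max}}{m}\rfloor$, a misprint inconsistent with the definitions and with the paper's examples.) *)

(* Defs.v *)
From HB Require Import structures.
From mathcomp Require Import all_boot all_order all_algebra all_field.
Set Implicit Arguments. Unset Strict Implicit. Unset Printing Implicit Defensive.
Import Order.TTheory GRing.Theory Num.Theory.
Local Open Scope ring_scope.

(* Q(q): the fraction field of Z[q]; Z[q,q^{-1}] sits inside it. *)
Notation Kq := {fraction {poly int}}.
Notation "p %:K" := (tofrac p) (at level 2, format "p %:K").

Definition laurent (x : Kq) : Prop :=
  exists (p : {poly int}) (k : nat), x = p%:K / ('X^k)%:K.

Definition qb (i : nat) : {poly int} := 'X^i - 1.
(* {i}_{q,n} = {i}_q ... {i-n+1}_q  (only used with n <= i) *)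
Definition qfall (i n : nat) : {poly int} := \prod_(j < n) qb (i - j).
Definition qfact (n : nat) : {poly int} := qfall n n.

Definition fgen (l k : nat) : {poly int} := qfact (l - k) * qfact k.

Definition Iid (l : nat) (x : Kq) : Prop :=
  exists c : 'I_l.+1 -> Kq, (forall k, laurent (c k)) /\
    x = \sum_(k < l.+1) c k * (fgen l k)%:K.

Definition idprod (P Q : Kq -> Prop) (x : Kq) : Prop :=
  exists s : seq (Kq * Kq), (forall u, u \in s -> P u.1 /\ Q u.2) /\
    x = \sum_(u <- s) u.1 * u.2.

Definition idbigprod (n : nat) (l : 'I_n -> nat) (s : seq 'I_n) : Kq -> Prop :=
  foldr (fun i acc => idprod (Iid (l i)) acc) laurent s.

Definition scaleset (c : Kq) (J : Kq -> Prop) (x : Kq) : Prop :=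
  exists y, J y /\ x = c * y.

Definition lmax (n : nat) (l : 'I_n -> nat) : nat := \max_(i < n) l i.
Definition lmin (n : nat) (l : 'I_n -> nat) : nat := \big[minn/lmax l]_(i < n) l i.

Definition tlm (l m : nat) : nat := if (m <= l)%N then ((l.+1 %/ m).-1)%N else 0%N.

Definition Za (n : nat) (l : 'I_n -> nat) : Kq -> Prop :=
  scaleset ((qfall (2 * lmax l).+1 (lmax l).+1)%:K / (qb 1)%:K) laurent.

Definition ZBr (n : nat) (l : 'I_n -> nat) (iM im : 'I_n) : Kq -> Prop :=
  scaleset ((qfall (2 * lmax l).+1 (lmax l).+1)%:K / ((qb 1)%:K * (qfact (lmin l))%:K))
    (idbigprod l [seq i <- enum 'I_n | (i != iM) && (i != im)]).

(* exponent of Phi_m; both nat subtractions are of nonnegative quantities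
   (the second one is exactly max(0, .)) *)
Definition expo (n : nat) (l : 'I_n -> nat) (iM im : 'I_n) (m : nat) : nat :=
  ((((2 * lmax l).+1 %/ m) - (lmax l %/ m) - (1 %/ m))
   + ((\sum_(i <- [seq i <- enum 'I_n | (i != iM) && (i != im)]) tlm (l i) m)
      - (lmin l %/ m)))%N.

(* the product over m >= 1; all factors with m > 2 lmax + 1 have exponent 0 *)
Definition RHSgen (n : nat) (l : 'I_n -> nat) (iM im : 'I_n) : {poly int} :=
  \prod_(1 <= m < (2 * lmax l).+2) ('Phi_m) ^+ expo l iM im m.

(* Main.v *)
Require Import Defs.
From HB Require Import structures.
From mathcomp Require Import all_boot all_order all_algebra all_field.
From mathcomp Require Import ring zify.
Set Implicit Arguments. Unset Strict Implicit. Unset Printing Implicit Defensive.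
Import Order.TTheory GRing.Theory Num.Theory.
Definition Gv (l j m : nat) : nat := l %/ m - (((l %% m).+2 <= m) && (l %% m < j)).
Definition Ev (l j m : nat) : nat := (l - j) %/ m + j %/ m.

Lemma carry_div l j m : 0 < m -> j <= l ->
  l %/ m = Ev l j m + (m <= (l - j) %% m + j %% m).
Proof. by move=> m0 jl; rewrite /Ev -divnD // subnK. Qed.

Lemma carry_mod l j m : 0 < m -> j <= l ->
  l %% m = (l - j) %% m + j %% m - (m <= (l - j) %% m + j %% m) * m.
Proof. by move=> m0 jl; rewrite -modnD // subnK. Qed.

Lemma Gv_le_Ev l j m : 0 < m -> j <= l -> Gv l j m <= Ev l j m.
Proof.
move=> m0 jl; rewrite /Gv (carry_div m0 jl).
have r := carry_mod m0 jl.
have x1 := ltn_pmod (l - j) m0; have y1 := ltn_pmod j m0; have y2 := leq_mod j m.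
case: (leqP m ((l - j) %% m + j %% m)) r => c /= r.
  rewrite mul1n in r.
  move: (l %% m) ((l - j) %% m) (j %% m) x1 y1 y2 c r => R X Y x1 y1 y2 c r.
  have h1 : R.+2 <= m by lia.
  rewrite h1.
  have h2 : R < j by lia.
  by rewrite h2 /= addnK.
by rewrite addn0 leq_subr.
Qed.

Lemma Gv_mono l j m : Gv l j.+1 m <= Gv l j m.
Proof.
rewrite /Gv; apply: leq_sub2l.
case: ((l %% m).+2 <= m) => //=; case: (ltnP (l %% m) j) => // h.
by rewrite (ltn_trans h (ltnSn j)).
Qed.

Lemma Gv0 l m : Gv l 0 m = Ev l 0 m.
Proof. by rewrite /Gv /Ev ltn0 andbF !subn0 div0n addn0. Qed.

Lemma Gv_l l m : 0 < m -> Gv l l m = if m <= l then l.+1 %/ m - 1 else 0.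
Proof.
move=> m0; rewrite /Gv; case: (leqP m l) => ml; last first.
  by rewrite divn_small.
have r1 := ltn_pmod l m0.
have rl : l %% m < l by apply: leq_trans ml.
rewrite rl andbT (divnS _ m0).
have e : l.+1 %% m = (l %% m).+1 %% m by rewrite -addn1 -modnDml addn1.
case: (ltnP (l %% m).+1 m) => h.
  have nd : ~~ (m %| l.+1).
    by rewrite /dvdn e modn_small //.
  by rewrite (negbTE nd) add0n.
have hm : (l %% m).+1 = m by apply/eqP; rewrite eqn_leq h r1.
have -> : m %| l.+1 by rewrite /dvdn e hm modnn.
by rewrite subn0 add1n subn1.
Qed.

Lemma Gv_stepA l j m : Gv l j.+1 m < Gv l j m -> l %% m = j /\ j.+2 <= m.
Proof.
rewrite /Gv; case a: ((l %% m).+2 <= m); rewrite ?andbF ?ltnn //=.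
case: (ltnP (l %% m) j) => h1; first by rewrite (ltn_trans h1 (ltnSn j)) ltnn.
case: (ltnP (l %% m) j.+1) => h2; last by rewrite ltnn.
move=> _; have e : l %% m = j by apply/eqP; rewrite eqn_leq h1 -ltnS h2.
by split=> //; rewrite -e.
Qed.

Lemma Gv_stepB l j n : 0 < n -> j <= l -> Gv l j n < Ev l j n ->
  [/\ l %% n = (l - j) %% n + j %% n, (l %% n).+2 <= n & l %% n < j].
Proof.
move=> n0 jl; rewrite /Gv (carry_div n0 jl).
have r := carry_mod n0 jl.
case: (leqP n ((l - j) %% n + j %% n)) r => c /= r.
  by case: (_ && _) => /=; rewrite ?addnK ?subn0 ?ltnn // addn1 ltnNge leqnSn.
rewrite /= mul0n addn0 subn0 in r *.
case: ((l %% n).+2 <= n); case: (l %% n < j) => //=; by rewrite ?subn0 ?ltnn.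
Qed.

Lemma Gv_step l j m n : 0 < m -> 0 < n -> j.+1 <= l ->
  Gv l j.+1 m < Gv l j m -> Gv l j.+1 n < Ev l j.+1 n -> ~~ (m %| n) && ~~ (n %| m).
Proof.
move=> m0 n0 jl /Gv_stepA [em jm] /(Gv_stepB n0 jl) [en bn cn].
have nj : n <= j.+1.
  rewrite leqNgt; apply/negP => h; move: cn; rewrite en (modn_small h).
  by rewrite ltnNge leq_addl.
apply/andP; split.
  apply/negP => /(dvdn_leq n0) h.
  by move: (leq_trans jm (leq_trans h nj)); rewrite ltnn.
apply/negP => nm.
have e1 : l %% n = j %% n by rewrite -(modn_dvdm l nm) em.
have e2 : j.+1 %% n = (j %% n).+1 %% n by rewrite -addn1 -modnDml addn1.
rewrite -e1 (modn_small bn) in e2.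
move: en; rewrite e2 => en.
have := leq_addl ((l - j.+1) %% n) (l %% n).+1.
by rewrite -en ltnn.
Qed.

Local Open Scope ring_scope.

Definition PP (N : nat) (e : nat -> nat) : {poly int} := \prod_(1 <= m < N) 'Phi_m ^+ e m.

Lemma PPD N e1 e2 : PP N (fun m => e1 m + e2 m)%N = PP N e1 * PP N e2.
Proof. by rewrite /PP -big_split; apply: eq_bigr => m _; rewrite exprD. Qed.

Lemma PP_eq N e1 e2 : (forall m, (0 < m < N)%N -> e1 m = e2 m) -> PP N e1 = PP N e2.
Proof. by move=> H; apply: eq_big_nat => m /H ->. Qed.

Lemma PP_monic N e : PP N e \is monic.
Proof. by apply: monic_prod => m _; apply: monic_exp; apply: Cyclotomic_monic. Qed.

Lemma PP_neq0 N e : PP N e != 0.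
Proof. exact: monic_neq0 (PP_monic N e). Qed.

Lemma PP_delta N m : (0 < m < N)%N -> PP N (fun k => (k == m : nat)) = 'Phi_m.
Proof.
move=> Hm; rewrite /PP (bigD1_seq m) ?mem_index_iota ?iota_uniq //= eqxx expr1.
by rewrite big1 ?mulr1 // => k /negbTE ->.
Qed.

Lemma qbE N i : (0 < i < N)%N -> qb i = PP N (fun m => (m %| i : nat)).
Proof.
case/andP=> i0 iN; rewrite /PP (eq_bigr (fun m => if (m %| i)%N then 'Phi_m else 1)); last first.
  by move=> m _; case: (m %| i)%N.
rewrite -big_mkcond -big_filter /qb -prod_Cyclotomic //; apply: perm_big.
apply: uniq_perm; first exact: divisors_uniq.
  by apply: filter_uniq; apply: iota_uniq.
move=> d; rewrite mem_filter mem_index_iota -dvdn_divisors //.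
case dd: (d %| i)%N => //=; symmetry; apply/andP; split.
  by rewrite lt0n; apply/eqP => d0; move: dd; rewrite d0 dvd0n; move/eqP=> i00; move: i0; rewrite i00.
by apply: leq_ltn_trans iN; apply: dvdn_leq.
Qed.

Definition zcop (A B : {poly int}) (c : int) := exists u v : {poly int}, u * A + v * B = c%:P.

Lemma zcopC A B c : zcop A B c -> zcop B A c.
Proof. by case=> u [v e]; exists v, u; rewrite addrC. Qed.

Lemma zcopM A B C c d : zcop A C c -> zcop B C d -> zcop (A * B) C (c * d).
Proof.
case=> u1 [v1 e1] [u2 [v2 e2]]; exists (u1 * u2), (v1 * (u2 * B) + u1 * A * v2 + v1 * v2 * C).
by rewrite polyCM -e1 -e2; ring.
Qed.

Lemma zcop1 C : zcop 1 C 1.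
Proof. by exists 1, 0; rewrite mul0r addr0 mulr1. Qed.

Lemma zcop_dvdl A K B c : zcop (A * K) B c -> zcop A B c.
Proof. by case=> u [v e]; exists (u * K), v; rewrite -e; ring. Qed.

Lemma qb_euclid a b : exists u v : {poly int}, u * qb a + v * qb b = qb (gcdn a b).
Proof.
have [n] := ubnP (a + b); elim: n a b => // n IH a b.
case: a => [|a]; first by move=> _; exists 0, 1; rewrite gcd0n mul0r add0r mul1r.
case: b => [|b]; first by move=> _; exists 1, 0; rewrite gcdn0 mul0r addr0 mul1r.
move=> Hab.
have key : forall x y : nat, (y <= x)%N -> qb x = 'X^(x - y) * qb y + qb (x - y).
  move=> x y yx; rewrite /qb; have -> : 'X^x = 'X^(x - y) * 'X^y :> {poly int}.
    by rewrite -exprD subnK.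
  ring.
case: (leqP b.+1 a.+1) => ba.
  have [u [v e]] := IH (a.+1 - b.+1)%N b.+1 ltac:(lia).
  exists u, (v - u * 'X^(a.+1 - b.+1)).
  have e2 : gcdn a.+1 b.+1 = gcdn (a.+1 - b.+1) b.+1.
    by rewrite -{1}(subnK ba) gcdnC gcdnDr gcdnC.
  rewrite e2 (key _ _ ba) -e.
  ring.
have ab : (a.+1 <= b.+1)%N by apply: ltnW.
have [u [v e]] := IH a.+1 (b.+1 - a.+1)%N ltac:(lia).
exists (u - v * 'X^(b.+1 - a.+1)), v.
have e2 : gcdn a.+1 b.+1 = gcdn a.+1 (b.+1 - a.+1).
  by rewrite -{1}(subnK ab) gcdnDr.
rewrite e2 (key _ _ ab) -e.
ring.
Qed.

Lemma PP_extract N e m : (0 < m < N)%N -> (0 < e m)%N ->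
  PP N e = 'Phi_m * PP N (fun k => e k - (k == m))%N.
Proof.
move=> Hm Hem; rewrite -(PP_delta Hm) -PPD; apply: PP_eq => k _.
by case: eqP => [->|_]; rewrite ?subn0 ?add0n // add1n subn1 prednK.
Qed.

Lemma qb_neq0 i : (0 < i)%N -> qb i != 0.
Proof. by move=> i0; rewrite (@qbE i.+1) ?i0 ?leqnn //; apply: PP_neq0. Qed.

Lemma qb_split N m d : (0 < d)%N -> (d %| m)%N -> (0 < m < N)%N ->
  qb m = qb d * PP N (fun e => ((e %| m) && ~~ (e %| d))%N : nat).
Proof.
move=> d0 dm /andP [m0 mN].
have dN : (0 < d < N)%N by rewrite d0 /=; apply: leq_ltn_trans mN; apply: dvdn_leq.
rewrite (qbE (N:=N)) ?m0 // (qbE dN) -PPD; apply: PP_eq => k _.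
case kd: (k %| d)%N; last by rewrite add0n andbT.
by rewrite (dvdn_trans kd dm).
Qed.

Lemma phi_cop1 m n : (0 < m)%N -> (0 < n)%N -> ~~ (m %| n)%N -> ~~ (n %| m)%N ->
  zcop 'Phi_m 'Phi_n 1.
Proof.
move=> m0 n0 mn nm; set N := (m + n).+1; set d := gcdn m n.
have d0 : (0 < d)%N by rewrite gcdn_gt0 m0.
have [u [v e]] := qb_euclid m n.
rewrite (@qb_split N m d) ?dvdn_gcdl ?m0 ?ltnS ?leq_addr // in e.
rewrite (@qb_split N n d) ?dvdn_gcdr ?n0 ?ltnS ?leq_addl // in e.
rewrite -/d in e.
have e' : qb d * (u * PP N (fun e => ((e %| m) && ~~ (e %| d))%N : nat) +
   v * PP N (fun e => ((e %| n) && ~~ (e %| d))%N : nat)) = qb d * 1.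
  by rewrite mulr1 -[X in _ = X]e; ring.
have {e'} e := mulfI (qb_neq0 d0) e'.
have md : ~~ (m %| d)%N by apply: contra mn => H; apply: dvdn_trans H (dvdn_gcdr _ _).
have nd : ~~ (n %| d)%N by apply: contra nm => H; apply: dvdn_trans H (dvdn_gcdl _ _).
set X := PP N _ in e; set Y := PP N _ in e.
have [X' HX] : exists X', X = 'Phi_m * X'.
  by eexists; rewrite /X (@PP_extract N _ m) // ?m0 ?ltnS ?leq_addr ?dvdnn ?md.
have [Y' HY] : exists Y', Y = 'Phi_n * Y'.
  by eexists; rewrite /Y (@PP_extract N _ n) // ?n0 ?ltnS ?leq_addl ?dvdnn ?nd.
apply: (@zcop_dvdl _ X'); apply: zcopC; apply: (@zcop_dvdl _ Y'); apply: zcopC.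
by exists u, v; rewrite polyC1 -e HX HY; ring.
Qed.

Lemma geom_split (x : {poly int}) (p : nat) :
  \sum_(i < p) x ^+ i = p%:R + (x - 1) * \sum_(i < p) \sum_(j < i) x ^+ j.
Proof.
rewrite mulr_sumr; under [X in _ = _ + X]eq_bigr => i _ do rewrite -subrX1.
by rewrite sumrB sumr_const card_ord addrC subrK.
Qed.

Lemma phi_cop_dvd m n : (0 < m)%N -> (0 < n)%N -> (m %| n)%N -> m != n ->
  exists c : int, c != 0 /\ zcop 'Phi_m 'Phi_n c.
Proof.
move=> m0 n0 mn mNn; set r := (n %/ m)%N.
have nE : n = (r * m)%N by rewrite divnK.
have r1 : (1 < r)%N.
  case: r nE => [|[|r']] nE //; first by move: n0; rewrite nE.
  by move: mNn; rewrite nE mul1n eqxx.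
set p := pdiv r; have pp : prime p by apply: pdiv_prime.
have p1 : (1 < p)%N by apply: prime_gt1.
have pr : (p %| r)%N by apply: pdiv_dvd.
set k := (n %/ p)%N.
have kE : k = (r %/ p * m)%N.
  by rewrite /k nE -{1}(divnK pr) mulnAC mulnK // ltnW.
have kp : (k * p)%N = n by rewrite kE mulnAC divnK.
have k0 : (0 < k)%N by move: n0; rewrite -kp muln_gt0 => /andP [].
have kn : (k < n)%N by rewrite -kp ltn_Pmulr.
have mk : (m %| k)%N by rewrite kE dvdn_mull.
set x : {poly int} := 'X^k.
have qn : qb n = qb k * \sum_(i < p) x ^+ i by rewrite /qb -kp exprM -subrX1.
have kdn : (k %| n)%N by rewrite -kp dvdn_mulr.
rewrite (@qb_split n.+1 n k) ?n0 ?ltnSn ?kdn // in qn.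
set Rr := PP _ _ in qn.
have {qn} qn := mulfI (qb_neq0 k0) qn.
have nk : ~~ (n %| k)%N by apply/negP => /(dvdn_leq k0); rewrite leqNgt kn.
have [R' HR] : exists R', Rr = 'Phi_n * R'.
  by eexists; rewrite /Rr (@PP_extract n.+1 _ n) ?n0 ?ltnSn ?dvdnn ?nk.
have [Q' HQ] : exists Q', qb k = 'Phi_m * Q'.
  eexists; rewrite (@qbE k.+1) ?k0 ?ltnSn //.
  by rewrite (@PP_extract k.+1 _ m) // ?m0 ?mk // ltnS dvdn_leq.
exists (p%:R : int); split; first by rewrite pnatr_eq0 -lt0n prime_gt0.
exists (- (Q' * \sum_(i < p) \sum_(j < i) x ^+ j)), R'.
rewrite polyC_natr.
have G := geom_split x p; rewrite -qn HR in G.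
have Hx : x - 1 = 'Phi_m * Q' by rewrite /x -HQ.
rewrite Hx in G.
have -> : (p%:R : {poly int}) = 'Phi_n * R' - ('Phi_m * Q') * \sum_(i < p) \sum_(j < i) x ^+ j.
  by rewrite G addrK.
ring.
Qed.

Lemma phi_cop m n : (0 < m)%N -> (0 < n)%N -> m != n ->
  exists c : int, c != 0 /\ zcop 'Phi_m 'Phi_n c.
Proof.
move=> m0 n0 mn.
case mdn: (m %| n)%N; first exact: phi_cop_dvd.
case ndm: (n %| m)%N.
  have nm : n != m by rewrite eq_sym.
  have [c [c0 h]] := phi_cop_dvd n0 m0 ndm nm.
  by exists c; split => //; apply: zcopC.
by exists 1; split => //; apply: phi_cop1; rewrite ?mdn ?ndm.
Qed.

Lemma zcop_PPl (Q : int -> Prop) N e B : Q 1 -> (forall a b, Q a -> Q b -> Q (a * b)) ->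
  (forall m, (0 < m < N)%N -> (0 < e m)%N -> exists c, Q c /\ zcop 'Phi_m B c) ->
  exists c, Q c /\ zcop (PP N e) B c.
Proof.
move=> Q1 QM H; rewrite /PP big_seq.
apply: (big_ind (fun x => exists c, Q c /\ zcop x B c)).
- by exists 1; split => //; apply: zcop1.
- move=> x y [c [Qc hc]] [d [Qd hd]]; exists (c * d); split; first exact: QM.
  exact: zcopM.
move=> i; rewrite mem_index_iota => Hi.
case ei: (e i) => [|k]; first by exists 1; split => //; rewrite expr0; apply: zcop1.
have [c [Qc hc]] := H i Hi ltac:(by rewrite ei).
elim: k {ei} => [|k [d [Qd hd]]]; first by exists c; rewrite expr1.
exists (c * d); split; first exact: QM.
by rewrite exprS; apply: zcopM.
Qed.

Lemma zcop_PP (Q : int -> Prop) N e1 e2 : Q 1 -> (forall a b, Q a -> Q b -> Q (a * b)) ->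
  (forall m n, (0 < m < N)%N -> (0 < n < N)%N -> (0 < e1 m)%N -> (0 < e2 n)%N ->
     exists c, Q c /\ zcop 'Phi_m 'Phi_n c) ->
  exists c, Q c /\ zcop (PP N e1) (PP N e2) c.
Proof.
move=> Q1 QM H; apply: zcop_PPl => // m Hm em.
have [c [Qc hc]] : exists c, Q c /\ zcop (PP N e2) 'Phi_m c.
  apply: zcop_PPl => // n Hn en.
  have [c [Qc hc]] := H m n Hm Hn em en.
  by exists c; split => //; apply: zcopC.
by exists c; split => //; apply: zcopC.
Qed.

Lemma PP0 N : PP N (fun _ => 0%N) = 1.
Proof. by rewrite /PP big1 // => m _; rewrite expr0. Qed.

Lemma PP_ext N N' e : (N <= N')%N -> (forall m, (N <= m)%N -> e m = 0%N) -> PP N' e = PP N e.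
Proof.
move=> NN' H; case: N NN' H => [|N] NN' H.
  rewrite /PP [in RHS]big_geq // big_nat big1 // => m /andP [_ _]; rewrite H ?expr0 //.
rewrite /PP (big_cat_nat (n := N.+1)) //= [X in _ * X = _]big1_seq ?mulr1 //.
by move=> m /andP [_]; rewrite mem_index_iota => /andP [h _]; rewrite H // expr0.
Qed.

Lemma PP_sub N e1 e2 : (forall m, (0 < m < N)%N -> (e1 m <= e2 m)%N) ->
  PP N e2 = PP N e1 * PP N (fun m => e2 m - e1 m)%N.
Proof. by move=> H; rewrite -PPD; apply: PP_eq => m /H h; rewrite subnKC. Qed.

Lemma qfactS n : qfact n.+1 = qb n.+1 * qfact n.
Proof. by rewrite /qfact /qfall big_ord_recl subn0. Qed.

Lemma qfactE N n : (n < N)%N -> qfact n = PP N (fun m => n %/ m)%N.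
Proof.
elim: n => [|n IH] nN.
  by rewrite /qfact /qfall big_ord0 -(PP0 N); apply: PP_eq => m _; rewrite div0n.
rewrite qfactS IH ?(ltnW nN) // (@qbE N) // -PPD; apply: PP_eq => m /andP [m0 _].
by rewrite divnS.
Qed.

Lemma fgenE N l k : (k <= l)%N -> (l < N)%N -> fgen l k = PP N (Ev l k).
Proof.
move=> kl lN; have kN : (k < N)%N by apply: leq_ltn_trans lN.
have lkN : (l - k < N)%N by apply: leq_ltn_trans lN; apply: leq_subr.
by rewrite /fgen (@qfactE N) // (@qfactE N k) // -PPD.
Qed.

Lemma qfall_fact i n : (n <= i)%N -> qfall i n * qfact (i - n) = qfact i.
Proof.
elim: n => [|n IH] ni; first by rewrite /qfall big_ord0 mul1r subn0.
have ni' : (n <= i)%N by apply: ltnW.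
rewrite /qfall big_ord_recr /= -/(qfall i n) -IH //.
have -> : (i - n = (i - n.+1).+1)%N by rewrite subnS prednK // subn_gt0.
by rewrite qfactS mulrA.
Qed.

Lemma qfallE N i n : (n <= i)%N -> (i < N)%N ->
  qfall i n = PP N (fun m => i %/ m - (i - n) %/ m)%N.
Proof.
move=> ni iN; have inN : (i - n < N)%N by apply: leq_ltn_trans iN; apply: leq_subr.
apply: (@mulIf _ (qfact (i - n))); first by rewrite (@qfactE N) // PP_neq0.
rewrite qfall_fact // (@qfactE N) // (@qfactE N (i - n)) //.
rewrite -PPD; apply: PP_eq => m _; rewrite subnK //; apply: leq_div2r; apply: leq_subr.
Qed.
Lemma Xk_neq0 k : ('X^k : {poly int})%:K != 0 :> Kq.
Proof. by rewrite tofrac_eq0 monic_neq0 // monicXn. Qed.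

Lemma laurentP p : laurent p%:K.
Proof. by exists p, 0%N; rewrite expr0 tofrac1 divr1. Qed.

Lemma laurentM x y : laurent x -> laurent y -> laurent (x * y).
Proof.
case=> p [a ->] [r [b ->]]; exists (p * r), (a + b)%N.
by rewrite !tofracM exprD tofracM invfM mulrACA.
Qed.

Lemma laurentD x y : laurent x -> laurent y -> laurent (x + y).
Proof.
case=> p [a ->] [r [b ->]]; exists (p * 'X^b + r * 'X^a), (a + b)%N.
have ha := Xk_neq0 a; have hb := Xk_neq0 b.
rewrite tofracD !tofracM exprD tofracM invfM mulrDl; congr (_ + _); rewrite -!mulrA; congr (_ * _).
  by rewrite mulrCA (mulfV hb) mulr1.
by rewrite [X in _ * X]mulrC mulrCA (mulfV ha) mulr1.
Qed.

Lemma laurentN x : laurent x -> laurent (- x).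
Proof. by case=> p [a ->]; exists (- p), a; rewrite tofracN mulNr. Qed.

Lemma laurent0 : laurent 0.
Proof. by rewrite -tofrac0; apply: laurentP. Qed.

Lemma laurent1 : laurent 1.
Proof. by rewrite -tofrac1; apply: laurentP. Qed.

Lemma laurentXV k : laurent (('X^k : {poly int})%:K)^-1.
Proof. by exists 1, k; rewrite tofrac1 mul1r. Qed.

Lemma laurent_sum (I : Type) (r : seq I) (P : pred I) (F : I -> Kq) :
  (forall i, laurent (F i)) -> laurent (\sum_(i <- r | P i) F i).
Proof.
move=> H; apply: (big_ind laurent); [exact: laurent0 | exact: laurentD | by []].
Qed.

Lemma Iid_add l x y : Iid l x -> Iid l y -> Iid l (x + y).
Proof.
case=> c1 [h1 ->] [c2 [h2 ->]]; exists (fun k => c1 k + c2 k); split.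
  by move=> k; apply: laurentD.
by rewrite -big_split; apply: eq_bigr => k _; rewrite mulrDl.
Qed.

Lemma Iid_scale l w x : laurent w -> Iid l x -> Iid l (w * x).
Proof.
move=> hw [c [h ->]]; exists (fun k => w * c k); split; first by move=> k; apply: laurentM.
by rewrite mulr_sumr; apply: eq_bigr => k _; rewrite mulrA.
Qed.

Lemma Iid_gen l k : (k <= l)%N -> Iid l (fgen l k)%:K.
Proof.
move=> kl; pose k' : 'I_l.+1 := Ordinal (kl : (k < l.+1)%N).
exists (fun j => if j == k' then 1 else 0); split.
  by move=> j; case: (j == k'); [exact: laurent1 | exact: laurent0].
rewrite (bigD1 k') //= eqxx mul1r big1 ?addr0 // => j /negbTE ->.
by rewrite mul0r.
Qed.
Lemma Gv_monoN l j j' m : (j <= j')%N -> (Gv l j' m <= Gv l j m)%N.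
Proof.
elim: j' => [|j' IH]; first by rewrite leqn0 => /eqP ->.
rewrite leq_eqVlt => /orP [/eqP -> //|]; rewrite ltnS => h.
exact: leq_trans (Gv_mono l j' m) (IH h).
Qed.

Lemma Gv_tlm l m : (0 < m)%N -> Gv l l m = tlm l m.
Proof. by move=> m0; rewrite Gv_l // /tlm; case: leqP => // _; rewrite subn1. Qed.

Lemma prefix_in l j : (j <= l)%N -> Iid l (PP l.+1 (Gv l j))%:K.
Proof.
elim: j => [|j IH] jl.
  rewrite (@PP_eq _ _ (Ev l 0)) => [|m _]; last exact: Gv0.
  by rewrite -fgenE //; apply: Iid_gen.
have jl' : (j <= l)%N by apply: ltnW.
have IH' := IH jl'; set N := l.+1.
have HA : PP N (Gv l j) = PP N (Gv l j.+1) * PP N (fun m => Gv l j m - Gv l j.+1 m)%N.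
  by apply: PP_sub => m _; apply: Gv_mono.
have HB : fgen l j.+1 = PP N (Gv l j.+1) * PP N (fun m => Ev l j.+1 m - Gv l j.+1 m)%N.
  by rewrite (@fgenE N) //; apply: PP_sub => m /andP [m0 _]; apply: Gv_le_Ev.
have [c [c1 [u [v e]]]] : exists c, c = 1 /\ zcop (PP N (fun m => Gv l j m - Gv l j.+1 m)%N)
    (PP N (fun m => Ev l j.+1 m - Gv l j.+1 m)%N) c.
  apply: (zcop_PP (Q := fun c => c = 1)) => //; first by move=> a b -> ->; rewrite mulr1.
  move=> m n /andP [m0 _] /andP [n0 _] hA hB; exists 1; split => //.
  rewrite subn_gt0 in hA; rewrite subn_gt0 in hB.
  by case/andP: (Gv_step m0 n0 jl hA hB) => h1 h2; apply: phi_cop1.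
subst c.
have -> : PP N (Gv l j.+1) = u * PP N (Gv l j) + v * fgen l j.+1.
  by rewrite HA HB -[LHS]mulr1 -polyC1 -e; ring.
rewrite tofracD (tofracM u) (tofracM v); apply: Iid_add; apply: Iid_scale.
- exact: laurentP.
- exact: IH'.
- exact: laurentP.
- exact: (Iid_gen jl).
Qed.

Lemma gl_in l : Iid l (PP l.+1 (tlm l))%:K.
Proof.
rewrite -(@PP_eq _ (Gv l l)) => [|m /andP [m0 _]]; last exact: Gv_tlm.
exact: prefix_in.
Qed.

Lemma tlm_le_Ev l k m : (k <= l)%N -> (0 < m)%N -> (tlm l m <= Ev l k m)%N.
Proof.
move=> kl m0; rewrite -Gv_tlm //.
exact: leq_trans (Gv_monoN l m kl) (Gv_le_Ev m0 kl).
Qed.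

Lemma Iid_sub l x : Iid l x -> scaleset (PP l.+1 (tlm l))%:K laurent x.
Proof.
case=> c [h ->].
exists (\sum_(k < l.+1) c k * (PP l.+1 (fun m => Ev l k m - tlm l m)%N)%:K); split.
  by apply: laurent_sum => k; apply: laurentM => //; apply: laurentP.
rewrite mulr_sumr; apply: eq_bigr => k _.
rewrite (@fgenE l.+1) ?leq_ord // (@PP_sub _ (tlm l) (Ev l k)); last first.
  by move=> m /andP [m0 _]; apply: tlm_le_Ev; rewrite ?leq_ord.
by rewrite tofracM mulrCA.
Qed.
Lemma monic_cancel (M P s : {poly int}) (c : int) : M \is monic -> c != 0 ->
  c%:P * P = M * s -> exists t, P = M * t.
Proof.
move=> mM c0 e.
have h : M %| P.
  rewrite -(dvdpZr _ _ c0) -mul_polyC e; exact: dvdp_mulIl.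
by have [r ->] := dvdpP_int h; exists r; rewrite zprimitive_monic.
Qed.

Lemma cancel_lemma N a b y z : laurent y -> laurent z ->
  (PP N a)%:K * y = (PP N b)%:K * z ->
  exists w, laurent w /\ y = (PP N (fun m => b m - a m)%N)%:K * w.
Proof.
move=> [p [k1 ey]] [r [k2 ez]] e.
set mn := fun m => minn (a m) (b m).
have Ha : PP N a = PP N mn * PP N (fun m => a m - b m)%N.
  rewrite (@PP_sub _ mn a) => [|m _]; last exact: geq_minl.
  by congr (_ * _); apply: PP_eq => m _; rewrite /mn minnE subKn // leq_subr.
have Hb : PP N b = PP N mn * PP N (fun m => b m - a m)%N.
  rewrite (@PP_sub _ mn b) => [|m _]; last exact: geq_minr.
  by congr (_ * _); apply: PP_eq => m _; rewrite /mn minnC minnE subKn // leq_subr.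
set A := PP N (fun m => a m - b m)%N in Ha; set B := PP N (fun m => b m - a m)%N in Hb *.
rewrite Ha Hb !tofracM -!mulrA in e.
have hmn : (PP N mn)%:K != 0 by rewrite tofrac_eq0 PP_neq0.
have {}e := mulfI hmn e.
have hx1 := Xk_neq0 k1; have hx2 := Xk_neq0 k2.
have e2 : A * (p * 'X^k2) = B * (r * 'X^k1).
  apply/eqP; rewrite -tofrac_eq; apply/eqP.
  rewrite !tofracM.
  have E1 : A%:K * (p%:K * ('X^k2 : {poly int})%:K) = A%:K * (p%:K / ('X^k1 : {poly int})%:K) * (('X^k1 : {poly int})%:K * ('X^k2 : {poly int})%:K).
    by rewrite -!mulrA (mulrA ('X^k1 : {poly int})%:K^-1) (mulVf hx1) mul1r.
  have E2 : B%:K * (r%:K * ('X^k1 : {poly int})%:K) = B%:K * (r%:K / ('X^k2 : {poly int})%:K) * (('X^k1 : {poly int})%:K * ('X^k2 : {poly int})%:K).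
    by rewrite -!mulrA [(('X^k2 : {poly int})%:K)^-1 * _]mulrCA (mulVf hx2) mulr1.
  by rewrite E1 E2 -ey -ez e.
have [c [c0 [u [v euv]]]] : exists c, c != 0 /\ zcop A B c.
  apply: (zcop_PP (Q := fun c => c != 0)) => //; first by move=> ? ? ? ?; apply: mulf_neq0.
  move=> m n /andP [m0 _] /andP [n0 _] hm hn; apply: phi_cop => //.
  apply/eqP => emn; move: hm hn; rewrite emn !subn_gt0 => h1 h2.
  by move: (ltn_trans h1 h2); rewrite ltnn.
have [t et] : exists t, p * 'X^k2 = B * t.
  apply: (@monic_cancel B _ (u * (r * 'X^k1) + v * (p * 'X^k2)) c (PP_monic _ _) c0).
  by rewrite -euv mulrDl -mulrA e2; ring.
exists (t%:K / ('X^(k1 + k2) : {poly int})%:K); split; first by exists t, (k1 + k2)%N.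
rewrite ey exprD tofracM invfM mulrA -tofracM -et tofracM -!mulrA; congr (_ * _).
by rewrite [('X^k2 : {poly int})%:K * _]mulrCA (mulfV hx2) mulr1.
Qed.
Lemma PP_sum N (I : Type) (s : seq I) (e : I -> nat -> nat) :
  PP N (fun m => \sum_(i <- s) e i m)%N = \prod_(i <- s) PP N (e i).
Proof.
elim: s => [|i s IH]; first by rewrite big_nil -(PP0 N); apply: PP_eq => m _; rewrite big_nil.
rewrite big_cons -IH -PPD; apply: PP_eq => m _; by rewrite big_cons.
Qed.

Lemma scaleset_add g x y : scaleset g laurent x -> scaleset g laurent y -> scaleset g laurent (x + y).
Proof.
case=> w1 [h1 ->] [w2 [h2 ->]]; exists (w1 + w2); split; first exact: laurentD.
by rewrite mulrDr.
Qed.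

Lemma idprod_sub (P Q : Kq -> Prop) a b :
  (forall x, P x -> scaleset a laurent x) -> (forall x, Q x -> scaleset b laurent x) ->
  forall x, idprod P Q x -> scaleset (a * b) laurent x.
Proof.
move=> HP HQ x [s [hs ->]]; elim: s hs => [|u s IH] hs.
  by exists 0; split; [exact: laurent0 | rewrite big_nil mulr0].
rewrite big_cons; apply: scaleset_add; last first.
  by apply: IH => v hv; apply: hs; rewrite in_cons hv orbT.
have [h1 h2] := hs u (mem_head _ _).
case: (HP _ h1) => w1 [hw1 ->]; case: (HQ _ h2) => w2 [hw2 ->].
exists (w1 * w2); split; first exact: laurentM.
by rewrite mulrACA.
Qed.

Lemma idprod_sup (P Q : Kq -> Prop) a b :
  (forall w, laurent w -> P (a * w)) -> Q b ->
  forall w, laurent w -> idprod P Q (a * b * w).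
Proof.
move=> HP HQ w hw; exists [:: (a * w, b)]; split.
  by move=> u; rewrite inE => /eqP -> /=; split => //; apply: HP.
by rewrite big_seq1 /= mulrAC.
Qed.

Lemma gl_ext NN l : (l < NN)%N -> PP NN (tlm l) = PP l.+1 (tlm l).
Proof.
move=> lN; apply: PP_ext => // m lm.
by rewrite /tlm leqNgt lm.
Qed.

Lemma idbig_sub n (l : 'I_n -> nat) (s : seq 'I_n) NN : (forall i, (l i < NN)%N) ->
  forall x, idbigprod l s x ->
  scaleset (PP NN (fun m => \sum_(i <- s) tlm (l i) m)%N)%:K laurent x.
Proof.
move=> hl; rewrite PP_sum; elim: s => [|i s IH] x /=.
  by rewrite big_nil tofrac1 => hx; exists x; split => //; rewrite mul1r.
rewrite big_cons tofracM; apply: idprod_sub => // y hy.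
by rewrite gl_ext //; apply: Iid_sub.
Qed.

Lemma idbig_sup n (l : 'I_n -> nat) (s : seq 'I_n) NN : (forall i, (l i < NN)%N) ->
  forall w, laurent w ->
  idbigprod l s ((PP NN (fun m => \sum_(i <- s) tlm (l i) m)%N)%:K * w).
Proof.
move=> hl; rewrite PP_sum; elim: s => [|i s IH] w hw /=.
  by rewrite big_nil tofrac1 mul1r.
rewrite big_cons tofracM; apply: idprod_sup => //.
  by move=> w' hw'; rewrite gl_ext // mulrC; apply: Iid_scale => //; apply: gl_in.
by rewrite -[X in _ X]mulr1; apply: IH; apply: laurent1.
Qed.

Unset Implicit Arguments.
Theorem corollary3p3 (n : nat) (l : 'I_n -> nat) (iM im : 'I_n) :
  (2 <= n)%N -> iM != im -> l iM = lmax l -> l im = lmin l ->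
  forall x : {fraction {poly int}},
    (Za l x /\ ZBr l iM im x) <-> scaleset (RHSgen l iM im)%:K laurent x.
Proof.
move=> n2 neq hM hm x.
have HR : RHSgen l iM im = PP (2 * lmax l).+2 (expo l iM im) by [].
rewrite HR /expo /Za /ZBr.
set L := lmax l; set NN := (2 * L).+2.
have hl : forall i, (l i < NN)%N.
  move=> i; have : (l i <= L)%N by apply: leq_bigmax.
  rewrite /NN; lia.
have hmin : (lmin l < NN)%N by rewrite -hm hl.
set S := [seq i <- enum 'I_n | (i != iM) && (i != im)].
set a := fun m => (lmin l %/ m)%N.
set b := fun m => (\sum_(i <- S) tlm (l i) m)%N.
set ca := fun m => ((2 * L).+1 %/ m - L %/ m - 1 %/ m)%N.
have Hq : qfall (2 * L).+1 L.+1 = qb 1 * PP NN ca.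
  rewrite (@qfallE NN) //; last by rewrite ltnS mul2n -addnn leq_addl.
  rewrite (@qbE NN 1) // -PPD; apply: PP_eq => m /andP [m0 _].
  have -> : ((2 * L).+1 - L.+1 = L)%N by lia.
  rewrite /ca; case: (ltngtP m 1) => [|m1|->]; first by rewrite ltnNge m0.
    rewrite (divn_small m1) subn0.
    by have -> : (m %| 1)%N = false by rewrite dvdn1 gtn_eqF.
  rewrite !divn1 dvdn1 eqxx; lia.
have Hf : qfact (lmin l) = PP NN a by apply: qfactE.
have qb1 : (qb 1)%:K != 0 by rewrite tofrac_eq0 qb_neq0.
have hca : (PP NN ca)%:K != 0 by rewrite tofrac_eq0 PP_neq0.
have ha : (PP NN a)%:K != 0 by rewrite tofrac_eq0 PP_neq0.
have Ec : (qfall (2 * L).+1 L.+1)%:K / (qb 1)%:K = (PP NN ca)%:K.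
  by rewrite Hq tofracM mulrAC (mulfV qb1) mul1r.
have EcB : (qfall (2 * L).+1 L.+1)%:K / ((qb 1)%:K * (qfact (lmin l))%:K) =
    (PP NN ca)%:K / (PP NN a)%:K.
  by rewrite Hq Hf tofracM invfM mulrACA (mulfV qb1) mul1r.
rewrite Ec EcB.
have HP : PP NN (fun m => ca m + (b m - a m))%N = PP NN ca * PP NN (fun m => b m - a m)%N.
  exact: PPD.
rewrite HP; split.
  case=> [[y [hy ex]] [j [hj ej]]].
  have [z [hz ej']] := idbig_sub hl hj.
  have e : (PP NN a)%:K * y = (PP NN b)%:K * z.
    have : (PP NN ca)%:K * y = (PP NN ca)%:K * (((PP NN a)%:K)^-1 * ((PP NN b)%:K * z)).
      by rewrite -ex ej ej' -mulrA.
    by move/(mulfI hca) => ->; rewrite mulrA (mulfV ha) mul1r.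
  have [w [hw ey]] := cancel_lemma hy hz e.
  by exists w; split => //; rewrite ex ey tofracM mulrA.
case=> w [hw ex]; split.
  exists ((PP NN (fun m => b m - a m)%N)%:K * w); split.
    by apply: laurentM => //; apply: laurentP.
  by rewrite ex tofracM mulrA.
exists ((PP NN b)%:K * ((PP NN (fun m => a m - b m)%N)%:K * w)); split.
  by apply: idbig_sup => //; apply: laurentM => //; apply: laurentP.
have Hmax : PP NN b * PP NN (fun m => a m - b m)%N = PP NN a * PP NN (fun m => b m - a m)%N.
  by rewrite -!PPD; apply: PP_eq => m _; lia.
rewrite mulrA -tofracM Hmax tofracM ex tofracM -!mulrA; congr (_ * _).
by rewrite [RHS]mulrA (mulVf ha) mul1r.
Qed.
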